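(* Let $M$ be an $H_v$-module over an $H_v$-ring $R$, $T$ an idempotent interval $t$-norm and $S$ an idempotent interval $s$-norm. If $A=(\widetilde{M}_A,\widetilde{N}_A)$ is an interval valued intuitionistic $(S,T)$-fuzzy $H_v$-submodule of $M$, then $A/\varepsilon^*=(\widetilde{M}_{\varepsilon^*},\widetilde{N}_{\varepsilon^*})$ is an interval valued intuitionistic $(S,T)$-fuzzy submodule of the fundamental module $M/\varepsilon^*$ (over the fundamental ring $R/\gamma^*$).
   Context: For a set $H$, $P^*(H)$ denotes the non-empty subsets of $H$; a hyperoperation is a map $H\times H\to P^*(H)$, and for $A,B\subseteq H$, $A\cdot B=\bigcup_{a\in A,b\in B}a\cdot b$. An $H_v$-semigroup is $(H,\cdot)$ with $(x\cdot(y\cdot z))\cap((x\cdot y)\cdot z)\neq\emptyset$ for all $x,y,z$; an $H_v$-group is an $H_v$-semigroup with $a\cdot H=H\cdot a=H$ for all $a\in H$; it is weak commutative if $x\cdot y\cap y\cdot x\ne\emptyset$ for all $x,y$. An $H_v$-ring is $(R,+,\cdot)$ with $(R,+)$ an $H_v$-group, $(R,\cdot)$ an $H_v$-semigroup, and $(x\cdot(y+z))\cap(x\cdot y+x\cdot z)\ne\emptyset$, $((x+y)\cdot z)\cap(x\cdot z+y\cdot z)\ne\emptyset$ for all $x,y,z$. An $H_v$-module over an $H_v$-ring $R$ is a non-empty set $M$ with $(M,+)$ a weak commutative $H_v$-group and a map $\cdot:R\times M\to P^*(M)$ such that for all $a,b\in R$, $x,y\in M$: $(a\cdot(x+y))\cap(a\cdot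 x+a\cdot y)\ne\emptyset$, $((a+b)\cdot x)\cap(a\cdot x+b\cdot x)\ne\emptyset$, $((a\cdot b)\cdot x)\cap(a\cdot(b\cdot x))\ne\emptyset$. Fundamental relations: $\gamma^*$ is the smallest equivalence relation on $R$ such that $R/\gamma^*$ is a ring, and $\varepsilon^*$ is the smallest equivalence relation on $M$ such that $M/\varepsilon^*$ is a module over $R/\gamma^*$, with operations $\varepsilon^*(x)\oplus\varepsilon^*(y)=\varepsilon^*(c)$ for any $c\in\varepsilon^*(x)+\varepsilon^*(y)$ and $\gamma^*(r)\odot\varepsilon^*(x)=\varepsilon^*(d)$ for any $d\in\gamma^*(r)\cdot\varepsilon^*(x)$ (equivalently, $\varepsilon^*$ is the transitive closure of the relation $x\,\varepsilon\,y\iff\{x,y\}\subseteq u$ for some finite expression $u$ built from the hyperoperations of $R$ and $M$ and the external hyperoperation). $\omega_M$ denotes the zero element of $(M/\varepsilon^*,\oplus)$ (the core of $M$). $D[0,1]$ is the set of intervals $[a^-,a^+]$ with $0\le a^-\le a^+\le 1$, ordered componentwise; infima and suprema of families are taken componentwise. A map $\delta:[0,1]^2\to[0,1]$ that is commutative, associative, idempotent and monotone is an idempotent $t$-norm if $\delta(x,1)=x$ for all $x$, and an idempotent $s$-norm if $\delta(1,1)=1$ and $\delta(x,0)=x$ for all $x$. An idempotent interval $t$-norm (resp. $s$-norm) is a map $D[0,1]^2\to D[0,1]$, $([a_1^-,a_1^+],[a_2^-,a_2^+])\mapsto[\delta(a_1^-,a_2^-),\delta(a_1^+,a_2^+)]$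 with $\delta$ an idempotent $t$-norm (resp. $s$-norm). An interval valued intuitionistic fuzzy set on $X$ is a pair $A=(\widetilde{M}_A,\widetilde{N}_A)$ of maps $X\to D[0,1]$ with $\sup\widetilde{M}_A(x)+\sup\widetilde{N}_A(x)\le1$ for all $x$. $A=(\widetilde{M}_A,\widetilde{N}_A)$ on $M$ is an interval valued intuitionistic $(S,T)$-fuzzy $H_v$-submodule if: (1) $T(\widetilde{M}_A(x),\widetilde{M}_A(y))\le\inf_{\alpha\in x+y}\widetilde{M}_A(\alpha)$ and $S(\widetilde{N}_A(x),\widetilde{N}_A(y))\ge\sup_{\alpha\in x+y}\widetilde{N}_A(\alpha)$ for all $x,y$; (2) for all $x,a\in M$ there is $y$ with $x\in a+y$, $T(\widetilde{M}_A(x),\widetilde{M}_A(a))\le\widetilde{M}_A(y)$, $S(\widetilde{N}_A(x),\widetilde{N}_A(a))\ge\widetilde{N}_A(y)$; (3) for all $x,a\in M$ there is $z$ with $x\in z+a$, $T(\widetilde{M}_A(x),\widetilde{M}_A(a))\le\widetilde{M}_A(z)$, $S(\widetilde{N}_A(x),\widetilde{N}_A(a))\ge\widetilde{N}_A(z)$; (4) $\widetilde{M}_A(x)\le\inf_{\alpha\in r\cdot x}\widetilde{M}_A(\alpha)$ and $\widetilde{N}_A(x)\ge\sup_{\alpha\in r\cdot x}\widetilde{N}_A(\alpha)$ for all $x\in M$, $r\in R$. $A/\varepsilon^*=(\widetilde{M}_{\varepsilon^*},\widetilde{N}_{\varepsilon^*})$ with $\widetilde{M}_{\varepsilon^*},\widetilde{N}_{\varepsilon^*}:M/\varepsilon^*\to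 D[0,1]$ defined by $\widetilde{M}_{\varepsilon^*}(\varepsilon^*(x))=\sup_{a\in\varepsilon^*(x)}\widetilde{M}_A(a)$ and $\widetilde{N}_{\varepsilon^*}(\varepsilon^*(x))=\inf_{a\in\varepsilon^*(x)}\widetilde{N}_A(a)$ if $\varepsilon^*(x)\ne\omega_M$, and $\widetilde{M}_{\varepsilon^*}(\omega_M)=[1,1]$, $\widetilde{N}_{\varepsilon^*}(\omega_M)=[0,0]$. For an ordinary module $M'$ over a ring $R'$, an interval valued intuitionistic fuzzy set $A'=(\widetilde{M}_{A'},\widetilde{N}_{A'})$ on $M'$ is an interval valued intuitionistic $(S,T)$-fuzzy submodule if: (i) $\widetilde{M}_{A'}(0)=[1,1]$ and $\widetilde{N}_{A'}(0)=[0,0]$; (ii) $T(\widetilde{M}_{A'}(x),\widetilde{M}_{A'}(y))\le\widetilde{M}_{A'}(x-y)$ and $S(\widetilde{N}_{A'}(x),\widetilde{N}_{A'}(y))\ge\widetilde{N}_{A'}(x-y)$ for all $x,y\in M'$; (iii) $\widetilde{M}_{A'}(x)\le\widetilde{M}_{A'}(r x)$ and $\widetilde{N}_{A'}(x)\ge\widetilde{N}_{A'}(r x)$ for all $x\in M'$, $r\in R'$. *)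

(* Defs.v *)
From HB Require Import structures.
From mathcomp Require Import all_boot all_order all_algebra.
From mathcomp Require Import boolp classical_sets reals.
From Stdlib Require Import Relations.
Set Implicit Arguments. Unset Strict Implicit. Unset Printing Implicit Defensive.
Import Order.TTheory GRing.Theory Num.Theory.
Local Open Scope classical_set_scope.
Local Open Scope ring_scope.

Definition hlift (A B C : Type) (op : A -> B -> set C) (X : set A) (Y : set B)
  : set C := [set c | exists a b, X a /\ Y b /\ op a b c].

Definition hv_semigroup (H : Type) (op : H -> H -> set H) : Prop :=
  (forall x y, op x y !=set0) /\
  (forall x y z,
     (hlift op [set x] (op y z) `&` hlift op (op x y) [set z]) !=set0).

Definition hv_group (H : Type) (op : H -> H -> set H) : Prop :=
  hv_semigroup op /\
  (forall a, hlift op [set a] setT = setT /\ hlift op setT [set a] = setT).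

Definition weak_commutative (H : Type) (op : H -> H -> set H) : Prop :=
  forall x y, (op x y `&` op y x) !=set0.

Definition hv_ring (R : Type) (radd rmul : R -> R -> set R) : Prop :=
  [/\ hv_group radd, hv_semigroup rmul,
      (forall x y z,
         (hlift rmul [set x] (radd y z) `&` hlift radd (rmul x y) (rmul x z))
           !=set0) &
      (forall x y z,
         (hlift rmul (radd x y) [set z] `&` hlift radd (rmul x z) (rmul y z))
           !=set0)].

Definition hv_module (R M : Type) (radd rmul : R -> R -> set R)
  (madd : M -> M -> set M) (smul : R -> M -> set M) : Prop :=
  [/\ inhabited M, hv_group madd, weak_commutative madd,
      (forall a x, smul a x !=set0) &
      [/\ (forall a x y,
             (hlift smul [set a] (madd x y) `&` hlift madd (smul a x) (smul a y))
               !=set0),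
          (forall a b x,
             (hlift smul (radd a b) [set x] `&` hlift madd (smul a x) (smul b x))
               !=set0) &
          (forall a b x,
             (hlift smul (rmul a b) [set x] `&` hlift smul [set a] (smul b x))
               !=set0)]].

Inductive rterm (R : Type) : Type :=
| RLeaf of R
| RAdd of rterm R & rterm R
| RMul of rterm R & rterm R.

Inductive mterm (R M : Type) : Type :=
| MLeaf of M
| MAdd of mterm R M & mterm R M
| MSmul of rterm R & mterm R M.

Arguments RLeaf {R}. Arguments RAdd {R}. Arguments RMul {R}.
Arguments MLeaf {R M}. Arguments MAdd {R M}. Arguments MSmul {R M}.

Fixpoint rsem (R : Type) (radd rmul : R -> R -> set R) (u : rterm R) : set R :=
  match u with
  | RLeaf r => [set r]
  | RAdd u v => hlift radd (rsem radd rmul u) (rsem radd rmul v)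
  | RMul u v => hlift rmul (rsem radd rmul u) (rsem radd rmul v)
  end.

Fixpoint msem (R M : Type) (radd rmul : R -> R -> set R)
  (madd : M -> M -> set M) (smul : R -> M -> set M) (u : mterm R M) : set M :=
  match u with
  | MLeaf m => [set m]
  | MAdd u v => hlift madd (msem radd rmul madd smul u) (msem radd rmul madd smul v)
  | MSmul r v => hlift smul (rsem radd rmul r) (msem radd rmul madd smul v)
  end.

Definition gamma_rel (R : Type) (radd rmul : R -> R -> set R) (x y : R) : Prop :=
  exists u, rsem radd rmul u x /\ rsem radd rmul u y.

Definition gammaS (R : Type) (radd rmul : R -> R -> set R) : relation R :=
  clos_trans R (gamma_rel radd rmul).

Definition eps_rel (R M : Type) (radd rmul : R -> R -> set R)
  (madd : M -> M -> set M) (smul : R -> M -> set M) (x y : M) : Prop :=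
  exists u, msem radd rmul madd smul u x /\ msem radd rmul madd smul u y.

Definition epsS (R M : Type) (radd rmul : R -> R -> set R)
  (madd : M -> M -> set M) (smul : R -> M -> set M) : relation M :=
  clos_trans M (eps_rel radd rmul madd smul).

(* Intervals D[0,1], represented as pairs (a^-, a^+).                  *)

Section Intervals.
Variable K : realType.

Definition in01 (x : K) : Prop := 0 <= x /\ x <= 1.

Definition inD01 (a : K * K) : Prop := [/\ 0 <= a.1, a.1 <= a.2 & a.2 <= 1].

Definition ile (a b : K * K) : Prop := a.1 <= b.1 /\ a.2 <= b.2.

Definition isup (I : Type) (F : I -> K * K) (X : set I) : K * K :=
  (sup [set (F i).1 | i in X], sup [set (F i).2 | i in X]).
Definition iinf (I : Type) (F : I -> K * K) (X : set I) : K * K :=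
  (inf [set (F i).1 | i in X], inf [set (F i).2 | i in X]).

Definition norm_axioms (d : K -> K -> K) : Prop :=
  [/\ (forall x y, in01 x -> in01 y -> in01 (d x y)),
      (forall x y, in01 x -> in01 y -> d x y = d y x),
      (forall x y z, in01 x -> in01 y -> in01 z -> d x (d y z) = d (d x y) z),
      (forall x, in01 x -> d x x = x) &
      (forall x y z, in01 x -> in01 y -> in01 z -> y <= z -> d x y <= d x z)].

Definition idem_tnorm (d : K -> K -> K) : Prop :=
  norm_axioms d /\ (forall x, in01 x -> d x 1 = x).

Definition idem_snorm (d : K -> K -> K) : Prop :=
  [/\ norm_axioms d, d 1 1 = 1 & (forall x, in01 x -> d x 0 = x)].

Definition inorm (d : K -> K -> K) (a b : K * K) : K * K :=
  (d a.1 b.1, d a.2 b.2).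

Definition ivifs (X : Type) (MA NA : X -> K * K) : Prop :=
  forall x, [/\ inD01 (MA x), inD01 (NA x) & (MA x).2 + (NA x).2 <= 1].

End Intervals.

Definition ivif_ST_hv_submodule (K : realType) (R M : Type)
  (madd : M -> M -> set M) (smul : R -> M -> set M)
  (T S : K * K -> K * K -> K * K) (MA NA : M -> K * K) : Prop :=
  [/\ (forall x y, ile (T (MA x) (MA y)) (iinf MA (madd x y)) /\
                   ile (isup NA (madd x y)) (S (NA x) (NA y))),
      (forall x a, exists y, [/\ madd a y x,
                                 ile (T (MA x) (MA a)) (MA y) &
                                 ile (NA y) (S (NA x) (NA a))]),
      (forall x a, exists z, [/\ madd z a x,
                                 ile (T (MA x) (MA a)) (MA z) &
                                 ile (NA z) (S (NA x) (NA a))]) &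
      (forall x r, ile (MA x) (iinf MA (smul r x)) /\
                   ile (isup NA (smul r x)) (NA x))].

(* The fundamental module M/eps^* and the quotient A/eps^*, described on
   representatives: a class of M/eps^* is eps^*(x) for some x : M.    *)
Section Quotient.
Variables (R M : Type) (radd rmul : R -> R -> set R)
  (madd : M -> M -> set M) (smul : R -> M -> set M).

Local Notation eS := (epsS radd rmul madd smul).

Definition eclass (x : M) : set M := [set a | eS x a].

(* eps^*(u) (+) eps^*(v) = eps^*(w): some c in eps^*(u) + eps^*(v) lies in eps^*(w) *)
Definition qadd_rel (u v w : M) : Prop :=
  exists u' v' c, [/\ eS u u', eS v v', madd u' v' c & eS w c].

(* eps^*(x) = omega_M, the zero of (M/eps^*, (+)): for every class
   eps^*(y), every c in eps^*(x) + eps^*(y) or eps^*(y) + eps^*(x)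
   lies in eps^*(y). *)
Definition in_core (x : M) : Prop :=
  forall x' y y' c, eS x x' -> eS y y' -> (madd x' y' c \/ madd y' x' c) -> eS y c.

Variable K : realType.

Definition Meps (MA : M -> K * K) (x : M) : K * K :=
  if pselect (in_core x) then (1, 1) else isup MA (eclass x).
Definition Neps (NA : M -> K * K) (x : M) : K * K :=
  if pselect (in_core x) then (0, 0) else iinf NA (eclass x).

(* Subtraction: eps^*(d) is
   eps^*(x) - eps^*(y) iff eps^*(y) (+) eps^*(d) = eps^*(x).
   Scalar action: gamma^*(r) (.) eps^*(x) = eps^*(d) for d in
   gamma^*(r) . eps^*(x). *)
Definition quotient_ivif_ST_submodule (T S : K * K -> K * K -> K * K)
  (MA NA : M -> K * K) : Prop :=
  [/\ ivifs (Meps MA) (Neps NA),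
      (forall o, in_core o -> Meps MA o = (1, 1) /\ Neps NA o = (0, 0)),
      (forall x y d, qadd_rel y d x ->
          ile (T (Meps MA x) (Meps MA y)) (Meps MA d) /\
          ile (Neps NA d) (S (Neps NA x) (Neps NA y))) &
      (forall r r' x x' d, gammaS radd rmul r r' -> eS x x' -> smul r' x' d ->
          ile (Meps MA x) (Meps MA d) /\ ile (Neps NA d) (Neps NA x))].

End Quotient.

(* Main.v *)
Require Import Defs.
From HB Require Import structures.
From mathcomp Require Import all_boot all_order all_algebra.
From mathcomp Require Import boolp classical_sets reals.
From Stdlib Require Import Relations.
Set Implicit Arguments. Unset Strict Implicit. Unset Printing Implicit Defensive.
Import Order.TTheory GRing.Theory Num.Theory.
Local Open Scope classical_set_scope.
Local Open Scope ring_scope.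

Section RealL.
Variable K : realType.

Lemma sup_le_img (I : Type) (f : I -> K) (X : set I) m :
  X !=set0 -> (forall i, X i -> f i <= m) -> sup [set f i | i in X] <= m.
Proof.
move=> [i Xi] H; apply: ge_sup; first by exists (f i), i.
by move=> _ [j Xj <-]; apply: H.
Qed.

Lemma le_sup_img (I : Type) (f : I -> K) (X : set I) i :
  (forall j, X j -> f j <= 1) -> X i -> f i <= sup [set f j | j in X].
Proof.
move=> H Xi; apply: ub_le_sup; last by exists i.
by exists 1 => _ [j Xj <-]; apply: H.
Qed.

Lemma inf_ge_img (I : Type) (f : I -> K) (X : set I) m :
  X !=set0 -> (forall i, X i -> m <= f i) -> m <= inf [set f i | i in X].
Proof.
move=> [i Xi] H; apply: lb_le_inf; first by exists (f i), i.
by move=> _ [j Xj <-]; apply: H.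
Qed.

Lemma inf_le_img (I : Type) (f : I -> K) (X : set I) i :
  (forall j, X j -> 0 <= f j) -> X i -> inf [set f j | j in X] <= f i.
Proof.
move=> H Xi; apply: ge_inf; last by exists i.
by exists 0 => _ [j Xj <-]; apply: H.
Qed.

Lemma min_sup_img (I : Type) (f g : I -> K) (X Y : set I) m :
  X !=set0 -> Y !=set0 ->
  (forall i j, X i -> Y j -> Num.min (f i) (g j) <= m) ->
  Num.min (sup [set f i | i in X]) (sup [set g j | j in Y]) <= m.
Proof.
move=> [i Xi] [j Yj] H; rewrite leNgt; apply/negP; rewrite lt_min => /andP[h1 h2].
have [_ [a Xa <-] ha] := sup_gt (ex_intro _ (f i) (ex_intro2 _ _ i Xi erefl)) h1.
have [_ [b Yb <-] hb] := sup_gt (ex_intro _ (g j) (ex_intro2 _ _ j Yj erefl)) h2.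
by move: (H _ _ Xa Yb); rewrite leNgt lt_min ha hb.
Qed.

Lemma max_inf_img (I : Type) (f g : I -> K) (X Y : set I) m :
  X !=set0 -> Y !=set0 ->
  (forall i j, X i -> Y j -> m <= Num.max (f i) (g j)) ->
  m <= Num.max (inf [set f i | i in X]) (inf [set g j | j in Y]).
Proof.
move=> [i Xi] [j Yj] H; rewrite leNgt; apply/negP; rewrite gt_max => /andP[h1 h2].
have [_ [a Xa <-] ha] := inf_lt (ex_intro _ (f i) (ex_intro2 _ _ i Xi erefl)) h1.
have [_ [b Yb <-] hb] := inf_lt (ex_intro _ (g j) (ex_intro2 _ _ j Yj erefl)) h2.
by move: (H _ _ Xa Yb); rewrite leNgt gt_max ha hb.
Qed.

Lemma tnorm_min (d : K -> K -> K) (x y : K) : idem_tnorm d -> in01 x -> in01 y -> d x y = Num.min x y.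
Proof.
move=> [[h01 hC hA hI hM] h1].
wlog xy : x y / x <= y.
  move=> W hx hy; case/orP: (le_total x y) => xy; first by apply: W.
  by rewrite hC // W // minC.
move=> [x0 x1] [y0 y1]; rewrite (min_idPl xy); apply/eqP; rewrite eq_le; apply/andP; split.
  rewrite -{2}(h1 x) //; apply: hM => //; split => //; exact: ler01.
by rewrite -{1}(hI x) //; apply: hM.
Qed.

Lemma snorm_max (d : K -> K -> K) (x y : K) : idem_snorm d -> in01 x -> in01 y -> d x y = Num.max x y.
Proof.
move=> [[h01 hC hA hI hM] h11 h0].
wlog xy : x y / x <= y.
  move=> W hx hy; case/orP: (le_total x y) => xy; first by apply: W.
  by rewrite hC // W // maxC.
move=> [x0 x1] [y0 y1]; rewrite (max_idPr xy); apply/eqP; rewrite eq_le; apply/andP; split.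
  by rewrite hC // -{2}(hI y) //; apply: hM.
rewrite hC // -{1}(h0 y) //; apply: hM => //; split => //; exact: ler01.
Qed.

Section Gen.
Variables (M : Type) (C : M -> Prop) (E : M -> M -> Prop).
Hypothesis HE : forall z, E z z.

Definition Mc (f : M -> K) x :=
  if pselect (C x) then 1 else sup [set f a | a in [set a | E x a]].
Definition Nc (f : M -> K) x :=
  if pselect (C x) then 0 else inf [set f a | a in [set a | E x a]].

Lemma cls_ne x : [set a | E x a] !=set0. Proof. by exists x. Qed.

Variables (f g : M -> K).
Hypothesis Hf : forall a, 0 <= f a <= 1.
Hypothesis Hg : forall a, 0 <= g a <= 1.

Lemma Mc_01 x : 0 <= Mc f x <= 1.
Proof.
rewrite /Mc; case: pselect => ?; first by rewrite ler01 lexx.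
apply/andP; split.
  have ub : forall j, [set a | E x a] j -> f j <= 1 by move=> j _; case/andP: (Hf j).
  by apply: le_trans (le_sup_img ub (HE x)); case/andP: (Hf x).
by apply: sup_le_img; [exact: cls_ne | move=> i _; case/andP: (Hf i)].
Qed.

Lemma Nc_01 x : 0 <= Nc f x <= 1.
Proof.
rewrite /Nc; case: pselect => ?; first by rewrite ler01 lexx.
apply/andP; split.
  by apply: inf_ge_img; [exact: cls_ne | move=> i _; case/andP: (Hf i)].
apply: le_trans (inf_le_img _ (HE x)) _; last by case/andP: (Hf x).
by move=> j _; case/andP: (Hf j).
Qed.

Lemma Mc_le x : (forall a, f a <= g a) -> Mc f x <= Mc g x.
Proof.
move=> H; rewrite /Mc; case: pselect => ? //.
apply: sup_le_img; first exact: cls_ne.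
have ub : forall j, [set a | E x a] j -> g j <= 1 by move=> j _; case/andP: (Hg j).
by move=> i Ei; apply: le_trans (H i) (le_sup_img ub Ei).
Qed.

Lemma Nc_le x : (forall a, f a <= g a) -> Nc f x <= Nc g x.
Proof.
move=> H; rewrite /Nc; case: pselect => ? //.
apply: inf_ge_img; first exact: cls_ne.
have lb : forall j, [set a | E x a] j -> 0 <= f j by move=> j _; case/andP: (Hf j).
by move=> i Ei; apply: le_trans (inf_le_img lb Ei) (H i).
Qed.

Lemma McNc x : (forall a, f a + g a <= 1) -> Mc f x + Nc g x <= 1.
Proof.
move=> H; rewrite /Mc /Nc; case: pselect => ?; first by rewrite addr0.
rewrite -lerBrDr; apply: sup_le_img; first exact: cls_ne.
move=> i Ei; rewrite lerBrDl addrC; apply: le_trans (H i).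
have lb : forall j, [set a | E x a] j -> 0 <= g j by move=> j _; case/andP: (Hg j).
by rewrite lerD2l; apply: inf_le_img lb Ei.
Qed.

Lemma part3M x y d :
  (forall u v, C u -> C v -> E u v) ->
  (C x -> C y -> C d) ->
  (forall a, exists y0, C y0 /\ f a <= f y0) ->
  (forall a b, E x a -> E y b -> exists z, E d z /\ Num.min (f a) (f b) <= f z) ->
  Num.min (Mc f x) (Mc f y) <= Mc f d.
Proof.
move=> HC Hd Hid Hk.
have ub : forall j, [set a | E d a] j -> f j <= 1 by move=> j _; case/andP: (Hf j).
rewrite {3}/Mc; case: pselect => Cd.
  by rewrite ge_min; case/andP: (Mc_01 x) => _ ->.
rewrite /Mc; case: pselect => Cx; case: pselect => Cy.
- by case: Cd; apply: Hd.
- rewrite (min_idPr (_ : _ <= 1)); last by apply: sup_le_img; [exact: cls_ne|move=> i _; case/andP: (Hf i)].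
  apply: sup_le_img; first exact: cls_ne.
  move=> b Eb; have [y0 [C0 le0]] := Hid b.
  have [z [Ez hz]] := Hk y0 b (HC _ _ Cx C0) Eb.
  apply: le_trans (le_sup_img ub Ez); apply: le_trans hz.
  by rewrite (min_idPr le0).
- rewrite (min_idPl (_ : _ <= 1)); last by apply: sup_le_img; [exact: cls_ne|move=> i _; case/andP: (Hf i)].
  apply: sup_le_img; first exact: cls_ne.
  move=> a Ea; have [y0 [C0 le0]] := Hid a.
  have [z [Ez hz]] := Hk a y0 Ea (HC _ _ Cy C0).
  apply: le_trans (le_sup_img ub Ez); apply: le_trans hz.
  by rewrite (min_idPl le0).
- apply: min_sup_img; try exact: cls_ne.
  move=> a b Ea Eb; have [z [Ez hz]] := Hk a b Ea Eb.
  exact: le_trans hz (le_sup_img ub Ez).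
Qed.

Lemma part3N x y d :
  (forall u v, C u -> C v -> E u v) ->
  (C x -> C y -> C d) ->
  (forall a, exists y0, C y0 /\ f y0 <= f a) ->
  (forall a b, E x a -> E y b -> exists z, E d z /\ f z <= Num.max (f a) (f b)) ->
  Nc f d <= Num.max (Nc f x) (Nc f y).
Proof.
move=> HC Hd Hid Hk.
have lb : forall j, [set a | E d a] j -> 0 <= f j by move=> j _; case/andP: (Hf j).
rewrite {1}/Nc; case: pselect => Cd.
  by rewrite le_max; case/andP: (Nc_01 x) => -> _.
rewrite /Nc; case: pselect => Cx; case: pselect => Cy.
- by case: Cd; apply: Hd.
- rewrite (max_idPr (_ : 0 <= _)); last by apply: inf_ge_img; [exact: cls_ne|move=> i _; case/andP: (Hf i)].
  apply: inf_ge_img; first exact: cls_ne.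
  move=> b Eb; have [y0 [C0 le0]] := Hid b.
  have [z [Ez hz]] := Hk y0 b (HC _ _ Cx C0) Eb.
  apply: le_trans (inf_le_img lb Ez) _; apply: le_trans hz _.
  by rewrite (max_idPr le0).
- rewrite (max_idPl (_ : 0 <= _)); last by apply: inf_ge_img; [exact: cls_ne|move=> i _; case/andP: (Hf i)].
  apply: inf_ge_img; first exact: cls_ne.
  move=> a Ea; have [y0 [C0 le0]] := Hid a.
  have [z [Ez hz]] := Hk a y0 Ea (HC _ _ Cy C0).
  apply: le_trans (inf_le_img lb Ez) _; apply: le_trans hz _.
  by rewrite (max_idPl le0).
- apply: max_inf_img; try exact: cls_ne.
  move=> a b Ea Eb; have [z [Ez hz]] := Hk a b Ea Eb.
  exact: le_trans (inf_le_img lb Ez) hz.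
Qed.

Lemma part4M x d :
  (C x -> C d) -> (forall a, E x a -> exists z, E d z /\ f a <= f z) ->
  Mc f x <= Mc f d.
Proof.
move=> Hd Hk.
have ub : forall j, [set a | E d a] j -> f j <= 1 by move=> j _; case/andP: (Hf j).
rewrite {2}/Mc; case: pselect => Cd; first by case/andP: (Mc_01 x).
rewrite /Mc; case: pselect => Cx; first by case: Cd; apply: Hd.
apply: sup_le_img; first exact: cls_ne.
move=> a Ea; have [z [Ez hz]] := Hk a Ea.
exact: le_trans hz (le_sup_img ub Ez).
Qed.

Lemma part4N x d :
  (C x -> C d) -> (forall a, E x a -> exists z, E d z /\ f z <= f a) ->
  Nc f d <= Nc f x.
Proof.
move=> Hd Hk.
have lb : forall j, [set a | E d a] j -> 0 <= f j by move=> j _; case/andP: (Hf j).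
rewrite {1}/Nc; case: pselect => Cd; first by case/andP: (Nc_01 x).
rewrite /Nc; case: pselect => Cx; first by case: Cd; apply: Hd.
apply: inf_ge_img; first exact: cls_ne.
move=> a Ea; have [z [Ez hz]] := Hk a Ea.
exact: le_trans (inf_le_img lb Ez) hz.
Qed.
End Gen.
End RealL.
Section Struct.
Variables (R M : Type) (radd rmul : R -> R -> set R)
  (madd : M -> M -> set M) (smul : R -> M -> set M).
Hypothesis hM : hv_module radd rmul madd smul.

Local Notation eS := (epsS radd rmul madd smul).
Local Notation er := (eps_rel radd rmul madd smul).

Lemma er_refl x : er x x. Proof. by exists (MLeaf x). Qed.
Lemma eS_refl x : eS x x. Proof. exact: t_step (er_refl x). Qed.
Lemma eS_trans x y z : eS x y -> eS y z -> eS x z. Proof. exact: t_trans. Qed.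
Lemma eS_sym x y : eS x y -> eS y x.
Proof.
elim=> [a b [u [h1 h2]]|a b c _ IH1 _ IH2]; first by apply: t_step; exists u.
exact: t_trans IH2 IH1.
Qed.

Lemma madd_ne x y : madd x y !=set0.
Proof. by case: hM => _ [[h _] _] _ _ _; apply: h. Qed.
Lemma smul_ne r x : smul r x !=set0.
Proof. by case: hM => _ _ _ h _; apply: h. Qed.

Lemma cong1 a a' b b' c c' : eS a a' -> er b b' -> madd a b c -> madd a' b' c' -> eS c c'.
Proof.
move=> H; elim: H b b' c c' => [x y [u [h1 h2]]|x y z _ IH1 _ IH2] b b' c c' [v [v1 v2]] hc hc'.
  by apply: t_step; exists (MAdd u v); split; [exists x, b | exists y, b'].
have [c1 hc1] := madd_ne y b'.
apply: eS_trans (IH1 b b' c c1 _ hc hc1) (IH2 b' b' c1 c' (er_refl _) hc1 hc').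
by exists v.
Qed.

Lemma cong_add a a' b b' c c' : eS a a' -> eS b b' -> madd a b c -> madd a' b' c' -> eS c c'.
Proof.
move=> Ha Hb; elim: Hb a a' c c' Ha => [x y h|x y z _ IH1 _ IH2] a a' c c' Ha hc hc'.
  exact: cong1 Ha h hc hc'.
have [c1 hc1] := madd_ne a' y.
exact: eS_trans (IH1 _ _ _ _ Ha hc hc1) (IH2 _ _ _ _ (eS_refl a') hc1 hc').
Qed.

Lemma cong_smul r a a' c c' : eS a a' -> smul r a c -> smul r a' c' -> eS c c'.
Proof.
move=> H; elim: H c c' => [x y [u [h1 h2]]|x y z _ IH1 _ IH2] c c' hc hc'.
  by apply: t_step; exists (MSmul (RLeaf r) u); split; [exists r, x | exists r, y].
have [c1 hc1] := smul_ne r y.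
exact: eS_trans (IH1 _ _ hc hc1) (IH2 _ _ hc1 hc').
Qed.

Lemma assoc x y z p q s t : madd x y p -> madd y z q -> madd p z s -> madd x q t -> eS s t.
Proof.
move=> hp hq hs ht.
have hass : hv_semigroup madd by case: hM => _ [h _] _ _ _.
have [w [[x0 [q0 [hx0 [hq0 hw1]]]] [p0 [z0 [hp0 [hz0 hw2]]]]]] := hass.2 x y z.
rewrite /= in hx0 hz0; subst x0 z0.
apply: eS_trans (cong_add (cong_add (eS_refl x) (eS_refl y) hp hp0) (eS_refl z) hs hw2) _.
exact: eS_sym (cong_add (eS_refl x) (cong_add (eS_refl y) (eS_refl z) hq hq0) ht hw1).
Qed.

Lemma rdiv a b : exists z, madd a z b.
Proof.
have hrep : hlift madd [set a] setT = setT by case: hM => _ [_ h] _ _ _; case: (h a).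
have : hlift madd [set a] setT b by rewrite hrep.
by move=> [a0 [z [/= -> [_ h]]]]; exists z.
Qed.

Lemma ldiv a b : exists z, madd z a b.
Proof.
have hrep : hlift madd setT [set a] = setT by case: hM => _ [_ h] _ _ _; case: (h a).
have : hlift madd setT [set a] b by rewrite hrep.
by move=> [z [a0 [_ [/= -> h]]]]; exists z.
Qed.

Definition IdP (e : M) := forall u b c, eS u e -> (madd u b c \/ madd b u c) -> eS c b.

Lemma ex_id : exists e, IdP e.
Proof.
have [m0] : inhabited M by case: hM.
have [e he] := rdiv m0 m0.
have [e' he'] := ldiv m0 m0.
have er b c : madd b e c -> eS c b.
  move=> h; have [c0 hc0] := ldiv m0 b; exact: (assoc hc0 he h hc0).
have el b c : madd e' b c -> eS c b.
  move=> h; have [c0 hc0] := rdiv m0 b; apply: eS_sym; exact: (assoc he' hc0 hc0 h).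
have ee : eS e' e.
  have [c hc] := madd_ne e' e.
  exact: eS_trans (eS_sym (er _ _ hc)) (el _ _ hc).
exists e => u b c hu [h|h].
  have [c1 hc1] := madd_ne e' b.
  exact: eS_trans (cong_add (eS_trans hu (eS_sym ee)) (eS_refl b) h hc1) (el _ _ hc1).
have [c1 hc1] := madd_ne b e.
exact: eS_trans (cong_add (eS_refl b) hu h hc1) (er _ _ hc1).
Qed.

Section WithId.
Variables (e : M) (He : IdP e).

Lemma mcancel b z a b' z' a' : madd b z a -> madd b' z' a' -> eS a a' -> eS b b' -> eS z z'.
Proof.
move=> h h' haa hbb.
have [b'' hb''] := ldiv b e.
have [t ht] := madd_ne b'' a.
have [s hs] := madd_ne e z.
have st := assoc hb'' h hs ht.
have sz := He (eS_refl e) (or_introl hs).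
have [e0 he0] := madd_ne b'' b'.
have e0e : eS e0 e := eS_sym (cong_add (eS_refl b'') hbb hb'' he0).
have [t' ht'] := madd_ne b'' a'.
have [s' hs'] := madd_ne e0 z'.
have st' := assoc he0 h' hs' ht'.
have sz' := He e0e (or_introl hs').
have tt' := cong_add (eS_refl b'') haa ht ht'.
apply: eS_trans (eS_sym sz) _; apply: eS_trans st _; apply: eS_trans tt' _.
exact: eS_trans (eS_sym st') sz'.
Qed.

Lemma core_of x : eS x e -> in_core radd rmul madd smul x.
Proof.
move=> hx x' y y' c hxx hyy h.
have hu : eS x' e := eS_trans (eS_sym hxx) hx.
have := He hu (h : madd x' y' c \/ madd y' x' c) => cy.
exact: eS_trans hyy (eS_sym cy).
Qed.

Lemma core_e x : in_core radd rmul madd smul x -> eS x e.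
Proof.
move=> hx; have [c hc] := madd_ne x e.
have ec := hx x e e c (eS_refl x) (eS_refl e) (or_introl hc).
have cx := He (eS_refl e) (or_intror hc).
exact: eS_trans (eS_sym cx) (eS_sym ec).
Qed.

Lemma core_eq u v : in_core radd rmul madd smul u -> in_core radd rmul madd smul v -> eS u v.
Proof. by move=> /core_e hu /core_e hv; exact: eS_trans hu (eS_sym hv). Qed.

Lemma core_fix a y0 : madd a y0 a -> in_core radd rmul madd smul y0.
Proof.
move=> h; apply: core_of; have [c hc] := madd_ne a e.
have ca := He (eS_refl e) (or_intror hc).
exact: mcancel h hc (eS_sym ca) (eS_refl a).
Qed.

Lemma smul_core r u d : eS u e -> smul r u d -> eS d e.
Proof.
move=> hu hd.
have hdis : forall a x y, (hlift smul [set a] (madd x y) `&` hlift madd (smul a x) (smul a y)) !=set0.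
  by case: hM => _ _ _ _ [].
have [w [[r0 [s [/= -> [hs hw1]]]] [p [q [hp [hq hw2]]]]]] := hdis r e e.
have se := He (eS_refl e) (or_introl hs).
have eu := eS_sym hu.
have wd := cong_smul (eS_trans se eu) hw1 hd.
have pd := cong_smul eu hp hd.
have qd := cong_smul eu hq hd.
have [c hc] := madd_ne p e.
have cp := He (eS_refl e) (or_intror hc).
have qe := mcancel hw2 hc (eS_trans wd (eS_trans (eS_sym pd) (eS_sym cp))) (eS_refl p).
exact: eS_trans (eS_sym qd) qe.
Qed.
End WithId.
End Struct.
Lemma MepsE (K : realType) (R M : Type)
  (radd rmul : R -> R -> set R) (madd : M -> M -> set M) (smul : R -> M -> set M)
  (MA : M -> K * K) x :
  Meps radd rmul madd smul MA x =
  (Mc (in_core radd rmul madd smul) (epsS radd rmul madd smul) (fun a => (MA a).1) x,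
   Mc (in_core radd rmul madd smul) (epsS radd rmul madd smul) (fun a => (MA a).2) x).
Proof. by rewrite /Meps /Mc; case: pselect. Qed.
Lemma NepsE (K : realType) (R M : Type)
  (radd rmul : R -> R -> set R) (madd : M -> M -> set M) (smul : R -> M -> set M)
  (NA : M -> K * K) x :
  Neps radd rmul madd smul NA x =
  (Nc (in_core radd rmul madd smul) (epsS radd rmul madd smul) (fun a => (NA a).1) x,
   Nc (in_core radd rmul madd smul) (epsS radd rmul madd smul) (fun a => (NA a).2) x).
Proof. by rewrite /Neps /Nc; case: pselect. Qed.

Theorem theorem3p9 (K : realType) (R M : Type)
  (radd rmul : R -> R -> set R) (madd : M -> M -> set M) (smul : R -> M -> set M)
  (dT dS : K -> K -> K) (MA NA : M -> K * K) :
  hv_ring radd rmul ->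
  hv_module radd rmul madd smul ->
  idem_tnorm dT -> idem_snorm dS ->
  ivifs MA NA ->
  ivif_ST_hv_submodule madd smul (inorm dT) (inorm dS) MA NA ->
  quotient_ivif_ST_submodule radd rmul madd smul (inorm dT) (inorm dS) MA NA.
Proof.
move=> _ hM hT hS hA [h1 h2 h3 h4].
have [e He] := ex_id hM.
set C := in_core radd rmul madd smul.
set E := epsS radd rmul madd smul.
have HE : forall z, E z z by exact: eS_refl.
have b11 a : 0 <= (MA a).1 <= 1.
  by case: (hA a) => -[? ? ?] _ _; apply/andP; split => //; apply: le_trans; eauto.
have b12 a : 0 <= (MA a).2 <= 1.
  by case: (hA a) => -[? ? ?] _ _; apply/andP; split => //; apply: le_trans; eauto.
have b21 a : 0 <= (NA a).1 <= 1.
  by case: (hA a) => _ [? ? ?] _; apply/andP; split => //; apply: le_trans; eauto.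
have b22 a : 0 <= (NA a).2 <= 1.
  by case: (hA a) => _ [? ? ?] _; apply/andP; split => //; apply: le_trans; eauto.
have i01 (z : K) : 0 <= z <= 1 -> in01 z by case/andP.
have HC : forall u v, C u -> C v -> E u v by move=> u v Cu Cv; exact: (core_eq hM He Cu Cv).
have hTI (z : K) : 0 <= z <= 1 -> dT z z = z by move=> /i01 hz; case: hT => -[_ _ _ hI _] _; exact: hI.
have hSI (z : K) : 0 <= z <= 1 -> dS z z = z by move=> /i01 hz; case: hS => -[_ _ _ hI _] _ _; exact: hI.
split.
- move=> x; rewrite MepsE NepsE; split.
  + split => /=.
    * by case/andP: (Mc_01 C HE b11 x).
    * by apply: (Mc_le C HE b12 x) => a; case: (hA a) => -[].
    * by case/andP: (Mc_01 C HE b12 x).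
  + split => /=.
    * by case/andP: (Nc_01 C HE b21 x).
    * by apply: (Nc_le C HE b21 x) => a; case: (hA a) => _ [].
    * by case/andP: (Nc_01 C HE b22 x).
  + by apply: McNc => // a; case: (hA a).
- by move=> o ho; rewrite /Meps /Neps; case: pselect.
- move=> x y d [y' [d' [c [hyy hdd hc hxc]]]].
  have Hd : C x -> C y -> C d.
    move=> Cx Cy; apply: (core_of He).
    have [c2 hc2] := madd_ne hM y' e.
    have c2y := He _ _ _ (HE e) (or_intror hc2).
    have ye : E y' e := eS_trans (eS_sym (hyy)) (core_e hM He Cy).
    have xe : E c e := eS_trans (eS_sym hxc) (core_e hM He Cx).
    have := mcancel hM He hc hc2 (eS_trans xe (eS_sym (eS_trans c2y ye))) (HE y').
    by move=> de; exact: eS_trans hdd de.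
  have Hk a b : E x a -> E y b -> exists z, [/\ E d z,
      ile (inorm dT (MA a) (MA b)) (MA z) & ile (NA z) (inorm dS (NA a) (NA b))].
    move=> xa yb; have [z [hz hzT hzS]] := h2 a b.
    exists z; split => //.
    have := mcancel hM He hz hc (eS_trans (eS_sym xa) hxc) (eS_trans (eS_sym yb) hyy).
    by move=> zd; exact: eS_trans hdd (eS_sym zd).
  have Hid a : exists y0, [/\ C y0, ile (MA a) (MA y0) & ile (NA y0) (NA a)].
    have [y0 [hy hyT hyS]] := h2 a a.
    exists y0; split; first exact: (core_fix hM He hy).
    + by move: hyT; rewrite /ile /inorm /= !hTI.
    + by move: hyS; rewrite /ile /inorm /= !hSI.
  rewrite !MepsE !NepsE /ile /inorm /=.
  rewrite !(@tnorm_min K dT _ _ hT) //; try by apply: i01; first [exact: Mc_01 | exact: Nc_01].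
  rewrite !(@snorm_max K dS _ _ hS) //; try by apply: i01; first [exact: Mc_01 | exact: Nc_01].
  split; split.
  + apply: part3M => // [a|a b xa yb].
      by have [y0 [? [? ?] _]] := Hid a; exists y0.
    have [z [? [? ?] _]] := Hk a b xa yb; exists z; split => //.
    by rewrite -(@tnorm_min K dT _ _ hT) //; apply: i01.
  + apply: part3M => // [a|a b xa yb].
      by have [y0 [? [? ?] _]] := Hid a; exists y0.
    have [z [? [? ?] _]] := Hk a b xa yb; exists z; split => //.
    by rewrite -(@tnorm_min K dT _ _ hT) //; apply: i01.
  + apply: part3N => // [a|a b xa yb].
      by have [y0 [? _ [? ?]]] := Hid a; exists y0.
    have [z [? _ [? ?]]] := Hk a b xa yb; exists z; split => //.
    by rewrite -(@snorm_max K dS _ _ hS) //; apply: i01.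
  + apply: part3N => // [a|a b xa yb].
      by have [y0 [? _ [? ?]]] := Hid a; exists y0.
    have [z [? _ [? ?]]] := Hk a b xa yb; exists z; split => //.
    by rewrite -(@snorm_max K dS _ _ hS) //; apply: i01.
- move=> r r' x x' d _ hxx hd.
  have Hd : C x -> C d.
    move=> Cx; apply: (core_of He).
    exact: (smul_core hM He (eS_trans (eS_sym hxx) (core_e hM He Cx)) hd).
  have Hk a : E x a -> exists z, [/\ E d z, ile (MA a) (MA z) & ile (NA z) (NA a)].
    move=> xa; have [z hz] := smul_ne hM r' a.
    exists z; split.
    + exact: eS_sym (cong_smul hM (eS_trans (eS_sym xa) hxx) hz hd).
    + case: (h4 a r') => [[l1 l2] _]; split.
      * apply: le_trans l1 (inf_le_img _ hz) => j _; by case/andP: (b11 j).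
      * apply: le_trans l2 (inf_le_img _ hz) => j _; by case/andP: (b12 j).
    + case: (h4 a r') => [_ [l1 l2]]; split.
      * apply: le_trans (le_sup_img _ hz) l1 => j _; by case/andP: (b21 j).
      * apply: le_trans (le_sup_img _ hz) l2 => j _; by case/andP: (b22 j).
  rewrite !MepsE !NepsE /ile /=; split; split.
  + by apply: part4M => // a /Hk [z [? [? ?] _]]; exists z.
  + by apply: part4M => // a /Hk [z [? [? ?] _]]; exists z.
  + by apply: part4N => // a /Hk [z [? _ [? ?]]]; exists z.
  + by apply: part4N => // a /Hk [z [? _ [? ?]]]; exists z.
Qed.
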